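(* Let $\{\mu_t\}$ be a free convolution semigroup, $s\le t$, and let $\mathcal K_{s,t}^\ast$ be the adjoint of $\mathcal K_{s,t}$ on $\mathcal M$, i.e. $\langle\mathcal K_{s,t}^\ast\nu,p\rangle=\langle\nu,\mathcal K_{s,t}p\rangle$. Then for every $\nu\in\mathcal M$, $G_{\mathcal K_{s,t}^\ast\nu}(z)=G_\nu(F_{s,t}(z))$. In particular, if $\{P_n(x,t)\}_{n\ge0}$ is a family of martingale polynomials for $\{\mu_t\}$ with $\deg P_n=n$, and $\{P_n^\ast(t)\}$ is the dual basis of $\mathcal M$ (i.e. $\langle P_n^\ast(t),P_k(\cdot,t)\rangle=\delta_{nk}$), then $G_{P_n^\ast(t)}(z)=G_{P_n^\ast(s)}(F_{s,t}(z))$.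
   Context: $\mathcal M$ is the space of linear functionals on $\mathbb C[x]$; for $\nu\in\mathcal M$, $G_\nu(z)=\sum_{n\ge0}\langle\nu,x^n\rangle z^{-(n+1)}$ (formal series in $z^{-1}$). $\mu$ is a freely infinitely divisible probability measure with all moments finite, $\{\mu_t\}$ its free convolution semigroup ($R_{\mu_t}=tR_\mu$, where $R_\nu=K_\nu-\frac1z$ and $K_\nu$ is the compositional inverse of $G_\nu$), $G_t=G_{\mu_t}$, $K_t=K_{\mu_t}$, $F_{s,t}=K_s\circ G_t$. $\mathcal K_{s,t}$ is the linear operator on $\mathbb C[x]$ determined coefficientwise by $\mathcal K_{s,t}(\mathrm{Res}_z)=\mathrm{Res}_{F_{s,t}(z)}$, $\mathrm{Res}_z(x)=\frac{1}{z-x}=\sum x^nz^{-(n+1)}$. A martingale polynomial is $p(x,t)$, polynomial in $x$, with $\mathcal K_{s,t}(p(\cdot,t))=p(\cdot,s)$ for $s<t$. *)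

(* Defs.v *)
From HB Require Import structures.
From mathcomp Require Import all_boot all_order all_algebra.
From mathcomp Require Import all_classical all_reals all_analysis.
From mathcomp Require Import complex.

Set Implicit Arguments.
Unset Strict Implicit.
Unset Printing Implicit Defensive.

Import Order.TTheory GRing.Theory Num.Theory.
Local Open Scope ring_scope.

(* Formal power series in a variable w (here w = z^{-1}), represented  *)
(* by their coefficient sequences  a : nat -> C  (a n = [w^n] a).      *)
Section FPS.
Variable C : fieldType.

Definition sone : nat -> C := fun n => (n == 0)%:R.

Definition smul (a b : nat -> C) : nat -> C :=
  fun n => \sum_(i < n.+1) a i * b (n - i)%N.

Definition spow (a : nat -> C) (k : nat) : nat -> C := iter k (smul a) sone.

Definition sshift (a : nat -> C) : nat -> C :=
  fun n => if n is n'.+1 then a n' else 0.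

Definition sadd (a b : nat -> C) : nat -> C := fun n => a n + b n.

(* multiplicative inverse of a series with invertible constant term:
   b 0 = (a 0)^-1,  b n = - (a 0)^-1 * \sum_{i=1}^n a i * b (n - i). *)
Fixpoint sinv_seq (a : nat -> C) (n : nat) : seq C :=
  match n with
  | 0 => [:: (a 0%N)^-1]
  | n'.+1 =>
      let s := sinv_seq a n' in
      rcons s (- (a 0%N)^-1 * \sum_(j < n'.+1) a j.+1 * nth 0 s (n' - j)%N)
  end.
Definition sinv (a : nat -> C) : nat -> C := fun n => nth 0 (sinv_seq a n) n.

(* composition a(b(w)) of power series, for b with b 0 = 0 *)
Definition scomp (a b : nat -> C) : nat -> C :=
  fun n => \sum_(j < n.+1) a j * spow b j n.

(* A Cauchy-type series  G(z) = \sum_n g n z^{-(n+1)}  is represented by g.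
   A Laurent series of the form  Phi(z) = z * h(1/z)  with h 0 <> 0 is
   represented by h.  [cauchy_comp g h] is the coefficient sequence of
   G(Phi(z)) = \sum_n g n Phi(z)^{-(n+1)}, expanded in powers of z^{-1}
   (it is again of Cauchy type: its coefficient of z^{-(k+1)} is k-th entry),
   using  Phi(z)^{-1} = w * (1/h)(w),  w = z^{-1}. *)
Definition recip_laurent (h : nat -> C) : nat -> C := sshift (sinv h).

Definition cauchy_comp (g h : nat -> C) : nat -> C :=
  fun k => \sum_(n < k.+1) g n * spow (recip_laurent h) n.+1 k.+1.

(* R-transform: r is the R-transform of the Cauchy-type series with
   coefficients m (m 0 = 1), i.e. K(w) = 1/w + R(w) with R(w) = \sum r n w^n
   is the compositional inverse of G: G(K(w)) = w.  Here K(w) = w^{-1} hK(w)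
   with hK = 1 + w R(w). *)
Definition K_of_R (r : nat -> C) : nat -> C := sadd sone (sshift r).

Definition is_Rtransform (m r : nat -> C) : Prop :=
  forall k, cauchy_comp m (K_of_R r) k = (k == 0)%:R.

(* F_{s,t} = K_s o G_t, where G_t(z) = \sum m_t n z^{-(n+1)} = w * mt(w)
   and K_s(u) = u^{-1} + R_s(u).  Then
   F_{s,t}(z) = z * hF(w),  hF = (1/mt) + w * R_s(w * mt(w)). *)
Definition F_laurent (rs mt : nat -> C) : nat -> C :=
  sadd (sinv mt) (sshift (scomp rs (sshift mt))).

End FPS.

(* The operator K_{s,t} on C[x], determined coefficientwise by         *)
(*   K_{s,t}(Res_z) = Res_{F_{s,t}(z)},  Res_z(x) = \sum x^n z^{-(n+1)}: *)
(* K_{s,t}(x^k) = [z^{-(k+1)}] \sum_n x^n F(z)^{-(n+1)}.               *)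
Section Operator.
Variable C : fieldType.

Definition Kmono (hF : nat -> C) (k : nat) : {poly C} :=
  \sum_(n < k.+1) (spow (recip_laurent hF) n.+1 k.+1) *: 'X^n.

Definition Kop (hF : nat -> C) (p : {poly C}) : {poly C} :=
  \sum_(k < size p) p`_k *: Kmono hF k.

(* Linear functionals on C[x] (the space M) and their Cauchy series *)
Definition lin_functional (nu : {poly C} -> C) : Prop :=
  forall (a : C) (p q : {poly C}), nu (a *: p + q) = a * nu p + nu q.

Definition Gfun (nu : {poly C} -> C) : nat -> C := fun n => nu 'X^n.

Definition Kadj (hF : nat -> C) (nu : {poly C} -> C) : {poly C} -> C :=
  fun p => nu (Kop hF p).

End Operator.

Section Moments.
Variable R : realType.
Local Open Scope ereal_scope.

Definition finite_moments (P : probability R R) : Prop :=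
  forall n : nat, P.-integrable setT (fun x : R => (x ^+ n)%:E).

Definition moment (P : probability R R) (n : nat) : R :=
  fine (\int[P]_x (x ^+ n)%:E).

Local Close Scope ereal_scope.

Definition cmoment (P : probability R R) : nat -> R[i] :=
  fun n => real_complex R (moment P n).

Definition rscale (t : R) (r : nat -> R[i]) : nat -> R[i] :=
  fun n => real_complex R t * r n.

(* free infinite divisibility, at the level of R-transforms: for every
   n >= 1 there is a probability measure nu with all moments finite and
   R_nu = (1/n) R_mu, i.e. nu^{boxplus n} = mu. *)
Definition freely_inf_div (P : probability R R) : Prop :=
  forall r : nat -> R[i], is_Rtransform (cmoment P) r ->
  forall n : nat, (0 < n)%N ->
  exists nu : probability R R, finite_moments nu /\
     is_Rtransform (cmoment nu) (rscale (n%:R^-1) r).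

(* the Laurent series F_{s,t} = K_s o G_t for the semigroup with
   R_{mu_s} = s R_mu *)
Definition Fst (r : nat -> R[i]) (s : R) (mut : probability R R) : nat -> R[i] :=
  F_laurent (rscale s r) (cmoment mut).

End Moments.

(* Main.v *)
Require Import Defs.
From HB Require Import structures.
From mathcomp Require Import all_boot all_order all_algebra.
From mathcomp Require Import all_classical all_reals all_analysis.
From mathcomp Require Import complex.
From mathcomp Require Import ring.
Set Implicit Arguments.
Unset Strict Implicit.
Unset Printing Implicit Defensive.
Import Order.TTheory GRing.Theory Num.Theory.
Local Open Scope ring_scope.



Section Eqm.
Variable C : fieldType.
Implicit Types p q a b c : {poly C}.

Definition eqm (N : nat) p q := 'X^N %| (p - q).

Lemma dvdXn_coef N p : 'X^N %| p <-> (forall i, (i < N)%N -> p`_i = 0).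
Proof.
split.
  move=> /dvdpP [r ->] i iN; by rewrite coefMXn iN.
move=> H; rewrite -(poly_take_drop N p).
have -> : take_poly N p = 0.
  by apply/polyP => i; rewrite coef_take_poly coef0; case: ifP => // /H.
by rewrite add0r dvdp_mull.
Qed.

Lemma eqm_coef N p q : eqm N p q <-> (forall i, (i < N)%N -> p`_i = q`_i).
Proof.
rewrite /eqm; split.
  move/dvdXn_coef=> H i iN; have := H i iN; rewrite coefB.
  by move/eqP; rewrite subr_eq0 => /eqP.
by move=> H; apply/dvdXn_coef => i iN; rewrite coefB H // subrr.
Qed.

Lemma eqmxx N p : eqm N p p.
Proof. by rewrite /eqm subrr dvdp0. Qed.

Lemma eqm_sym N p q : eqm N p q -> eqm N q p.
Proof. rewrite /eqm => H; have -> : q - p = (-1) * (p - q) by rewrite mulN1r opprB.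
by apply: dvdp_mull. Qed.

Lemma eqm_trans N p q r : eqm N p q -> eqm N q r -> eqm N p r.
Proof.
rewrite /eqm => H1 H2; have -> : p - r = (p - q) + (q - r) by rewrite addrA subrK.
by rewrite dvdp_add.
Qed.

Lemma eqmD N p q p' q' : eqm N p q -> eqm N p' q' -> eqm N (p + p') (q + q').
Proof.
rewrite /eqm => H1 H2; have -> : p + p' - (q + q') = (p - q) + (p' - q') by rewrite opprD addrACA.
by rewrite dvdp_add.
Qed.

Lemma eqmM N p q p' q' : eqm N p q -> eqm N p' q' -> eqm N (p * p') (q * q').
Proof.
rewrite /eqm => H1 H2; have -> : p * p' - (q * q') = (p - q) * p' + q * (p' - q').
  by rewrite mulrBl mulrBr addrA subrK.
by apply: dvdp_add; [apply: dvdp_mulr | apply: dvdp_mull].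
Qed.

Lemma eqm_le M N p q : (M <= N)%N -> eqm N p q -> eqm M p q.
Proof. by move=> MN; apply: dvdp_trans; apply: dvdp_exp2l. Qed.

Lemma eqmX N p q : eqm N.+1 ('X * p) ('X * q) -> eqm N p q.
Proof.
move=> /eqm_coef H; apply/eqm_coef => i iN.
by have := H i.+1 iN; rewrite !coefXM.
Qed.

Lemma eqmXn N k p q : eqm N p q -> eqm (k + N) ('X^k * p) ('X^k * q).
Proof. by rewrite /eqm -mulrBr exprD => H; apply: dvdp_mul. Qed.

Lemma eqm0 p q : eqm 0 p q.
Proof. by rewrite /eqm expr0 dvd1p. Qed.

Lemma X_dvd_coef0 c : c`_0 = 0 -> 'X %| c.
Proof. by move=> H; have := (dvdXn_coef 1 c).2; rewrite expr1; apply => -[|]. Qed.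

Lemma comp_Xn n c : 'X^n \Po c = c ^+ n.
Proof.
elim: n => [|n IH]; first by rewrite !expr0 -polyC1 comp_polyC.
by rewrite !exprS comp_polyM IH comp_polyX.
Qed.

Lemma eqm_compl N p q c : c`_0 = 0 -> eqm N p q -> eqm N (p \Po c) (q \Po c).
Proof.
move=> c0 /dvdpP [r Hr]; rewrite /eqm.
rewrite -comp_polyB.
rewrite Hr comp_polyM.
apply: dvdp_mull.
rewrite comp_Xn.
by apply: dvdp_exp2r; apply: X_dvd_coef0.
Qed.

Lemma eqm_compr N p c c' : eqm N c c' -> eqm N (p \Po c) (p \Po c').
Proof.
move=> H; elim/poly_ind: p => [|p a IH]; first by rewrite !comp_poly0 eqmxx.
rewrite !comp_polyD !comp_polyM !comp_polyC !comp_polyX.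
by apply: eqmD; [apply: eqmM|apply: eqmxx].
Qed.

End Eqm.

Section Inj.
Variable C : fieldType.
Implicit Types p q a b c : {poly C}.

Lemma eqmN N p q : eqm N p q -> eqm N (- p) (- q).
Proof.
rewrite /eqm => H; have -> : - p - - q = (-1) * (p - q) by rewrite mulN1r opprB opprK addrC.
by apply: dvdp_mull.
Qed.

Lemma comp_inj N (G phi : {poly C}) : G`_0 = 0 -> G`_1 = 1 -> phi`_0 = 0 ->
  eqm N (G \Po phi) G -> eqm N phi 'X.
Proof.
move=> G0 G1 phi0 HN.
have : 'X^2 %| G - 'X.
  by apply/dvdXn_coef => -[|[|]] // _; rewrite coefB coefX /= ?G0 ?G1 subrr.
move=> /dvdpP [Q HQ]; have EG : G = 'X + Q * 'X^2 by rewrite -HQ addrC subrK.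
suff : forall k, (k <= N)%N -> eqm k phi 'X by apply.
elim=> [|k IH] kN; first exact: eqm0.
case: k IH kN => [|k] IH kN.
  by apply/eqm_coef => -[|] // _; rewrite coefX phi0.
have IHk := IH (ltnW kN).
have Ecomp : G \Po phi = phi + (Q \Po phi) * phi ^+ 2.
  by rewrite EG comp_polyD comp_polyM comp_polyX comp_Xn.
have H2 : eqm k.+2 (phi ^+ 2) ('X ^+ 2).
  rewrite /eqm subrXX.
  have -> : \sum_(i < 2) phi ^+ (2.-1 - i) * 'X ^+ i = phi + 'X.
    by rewrite big_ord_recr big_ord1 /= expr0 mulr1 subn0 expr1 expr1 mul1r.
  rewrite exprSr; apply: dvdp_mul => //.
  by apply: X_dvd_coef0; rewrite coefD phi0 coefX add0r.
have HA : eqm k.+2 ((Q \Po phi) * phi ^+ 2) (Q * 'X^2).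
  apply: (@eqm_trans _ _ _ ((Q \Po phi) * 'X^2)).
    by apply: eqmM => //; apply: eqmxx.
  have := eqmXn 2 (eqm_compr Q IHk); rewrite comp_polyXr => H3.
  have := eqm_le (_ : (k.+2 <= 2 + k.+1)%N) H3.
  move=> H4; rewrite (mulrC (Q \Po phi)) (mulrC Q); apply: H4.
  by rewrite add2n.
have HN' := eqm_le kN HN; rewrite Ecomp {1}EG in HN'.
have := eqmD HN' (eqmN HA).
by rewrite -!addrA !subrr !addr0.
Qed.

End Inj.

Section Series.
Variable C : fieldType.
Implicit Types a b : nat -> C.

Definition tr N a : {poly C} := \poly_(i < N) a i.

Lemma tr_coef N a i : (i < N)%N -> (tr N a)`_i = a i.
Proof. by move=> iN; rewrite coef_poly iN. Qed.

Lemma tr_eqm N a (p : {poly C}) : eqm N (tr N a) p <-> (forall i, (i < N)%N -> a i = p`_i).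
Proof.
split.
  by move/eqm_coef=> H i iN; rewrite -H // tr_coef.
by move=> H; apply/eqm_coef => i iN; rewrite tr_coef // H.
Qed.

Lemma tr_ext N a b : (forall i, a i = b i) -> tr N a = tr N b.
Proof. by move=> H; apply/polyP => i; rewrite !coef_poly H. Qed.

Lemma tr_smul N a b : eqm N (tr N (smul a b)) (tr N a * tr N b).
Proof.
apply/tr_eqm => i iN; rewrite coefM /smul; apply: eq_bigr => j _.
have ji : (j <= i)%N by rewrite -ltnS.
rewrite !tr_coef //; first by apply: leq_ltn_trans (leq_subr _ _) iN.
by apply: leq_ltn_trans ji iN.
Qed.

Lemma tr_sone N : eqm N (tr N (sone C)) 1.
Proof. by apply/tr_eqm => i iN; rewrite coef1. Qed.

Lemma tr_spow N a k : eqm N (tr N (spow a k)) (tr N a ^+ k).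
Proof.
elim: k => [|k IH]; first by rewrite expr0; apply: tr_sone.
rewrite exprS; apply: eqm_trans (tr_smul _ _ _) _.
by apply: eqmM => //; apply: eqmxx.
Qed.

Lemma tr_sshift N a : eqm N (tr N (sshift a)) ('X * tr N a).
Proof.
apply/tr_eqm => -[|i] iN; rewrite coefXM //=.
by rewrite tr_coef // ltnW.
Qed.

Lemma tr_sadd N a b : eqm N (tr N (sadd a b)) (tr N a + tr N b).
Proof. by apply/tr_eqm => i iN; rewrite coefD !tr_coef. Qed.

Lemma sum_widen (n1 m : nat) (F : nat -> C) : (n1 <= m)%N ->
  (forall i, (n1 <= i)%N -> (i < m)%N -> F i = 0) ->
  \sum_(i < n1) F i = \sum_(i < m) F i.
Proof.
move=> le H; rewrite (big_ord_widen m F le) big_mkcond; apply: eq_bigr => i _.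
by case: ifP => // /negbT; rewrite -leqNgt => h; rewrite H.
Qed.

Lemma comp_coef (p q : {poly C}) n : q`_0 = 0 ->
  (p \Po q)`_n = \sum_(i < n.+1) p`_i * (q ^+ i)`_n.
Proof.
move=> q0; rewrite coef_comp_poly.
rewrite (@sum_widen (size p) (size p + n.+1) (fun i => p`_i * (q ^+ i)`_n)) ?leq_addr //; last first.
  by move=> i /leq_sizeP -> // _; rewrite mul0r.
rewrite [RHS](@sum_widen (n.+1) (size p + n.+1) (fun i => p`_i * (q ^+ i)`_n)) ?leq_addl //.
move=> i ni _.
have : 'X^i %| q ^+ i by apply: dvdp_exp2r; apply: X_dvd_coef0.
by move/dvdXn_coef => -> //; rewrite mulr0.
Qed.

Lemma tr_scomp N a b : b 0%N = 0 -> eqm N (tr N (scomp a b)) (tr N a \Po tr N b).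
Proof.
move=> b0; apply/tr_eqm => i iN.
have tb0 : (tr N b)`_0 = 0 by rewrite coef_poly; case: N iN => //.
rewrite comp_coef // /scomp; apply: eq_bigr => j _.
have ji : (j <= i)%N by rewrite -ltnS.
rewrite tr_coef; last by apply: leq_ltn_trans ji iN.
by have /tr_eqm -> := tr_spow N b j.
Qed.

Lemma size_sinv_seq a n : size (sinv_seq a n) = n.+1.
Proof. by elim: n => [|n IH] //=; rewrite size_rcons IH. Qed.

Lemma sinv_seq_nth a n i : (i <= n)%N -> nth 0 (sinv_seq a n) i = sinv a i.
Proof.
elim: n => [|n IH]; first by rewrite leqn0 => /eqP ->.
rewrite leq_eqVlt => /orP [/eqP -> //|].
rewrite ltnS => le; rewrite /= nth_rcons size_sinv_seq ltnS le.
exact: IH.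
Qed.

Lemma sinvS a n : sinv a n.+1 =
  - (a 0%N)^-1 * \sum_(j < n.+1) a j.+1 * sinv a (n - j)%N.
Proof.
rewrite {1}/sinv /= nth_rcons size_sinv_seq ltnn eqxx; congr (_ * _).
apply: eq_bigr => j _; rewrite sinv_seq_nth //; exact: leq_subr.
Qed.

Lemma smul_sinv a n : a 0%N != 0 -> smul a (sinv a) n = sone C n.
Proof.
move=> a0; case: n => [|n].
  by rewrite /smul big_ord1 /sinv /= mulfV.
rewrite /smul big_ord_recl /= subn0 sinvS mulrA mulrN mulfV // mulN1r.
rewrite /sone /=; apply/eqP; rewrite addrC subr_eq0; apply/eqP.
by apply: eq_bigr => j _.
Qed.

Lemma tr_sinv N a : a 0%N != 0 -> eqm N (tr N a * tr N (sinv a)) 1.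
Proof.
move=> a0; apply: eqm_trans (eqm_sym (tr_smul _ _ _)) _.
rewrite (@tr_ext N _ (sone C)); first exact: tr_sone.
by move=> i; apply: smul_sinv.
Qed.

End Series.

Section Fid.
Variable C : fieldType.

Lemma smul_sone (a : nat -> C) n : smul a (sone C) n = a n.
Proof.
rewrite /smul big_ord_recr /= subnn /sone eqxx mulr1 big1 ?add0r // => i _.
by rewrite subn_eq0 leqNgt ltn_ord mulr0.
Qed.

Lemma F_id (m rho : nat -> C) : is_Rtransform m rho ->
  forall n, F_laurent rho m n = sone C n.
Proof.
move=> HR n.
set hK := K_of_R rho; set g := recip_laurent hK.
have hK0 : hK 0%N = 1 by rewrite /hK /K_of_R /sadd /sshift /sone /= addr0.
have m0 : m 0%N = 1.
  have := HR 0%N; rewrite /cauchy_comp big_ord1 /spow /= smul_sone.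
  by rewrite /g /recip_laurent /sshift /sinv /= -/hK hK0 invr1 mulr1.
set N := n.+3.
set Gp := tr N g; set Gam := tr N (sshift m); set M := tr N m.
set IM := tr N (sinv m); set H := tr N hK; set IH := tr N (sinv hK).
set Pr := tr N rho.
have F1 : eqm N (H * IH) 1 by apply: tr_sinv; rewrite hK0 oner_neq0.
have F2 : eqm N (M * IM) 1 by apply: tr_sinv; rewrite m0 oner_neq0.
have Gp0 : Gp`_0 = 0 by rewrite tr_coef.
have Gam0 : Gam`_0 = 0 by rewrite tr_coef.
have Gam1 : Gam`_1 = 1 by rewrite tr_coef.
have F3 : eqm N (Gam \Po Gp) 'X.
  apply/eqm_coef => -[|k] kN.
    by rewrite comp_coef // big_ord1 Gam0 mul0r coefX.
  rewrite comp_coef // big_ord_recl Gam0 mul0r add0r coefX.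
  have := HR k; rewrite /cauchy_comp => <-; apply: eq_bigr => j _.
  have jk : (j <= k)%N by rewrite -ltnS.
  rewrite tr_coef; last by apply: leq_ltn_trans kN; rewrite ltnS.
  have -> : (lift ord0 j : nat) = j.+1 by [].
  rewrite /sshift /=; congr (_ * _).
  have /tr_eqm HH := tr_spow N g j.+1; by rewrite -HH.
have F4 : eqm N Gp ('X * IH) by apply: tr_sshift.
have F5 : eqm N Gam ('X * M) by apply: tr_sshift.
have F6 : eqm N H (1 + 'X * Pr).
  apply: eqm_trans (tr_sadd _ _ _) _; apply: eqmD; first exact: tr_sone.
  exact: tr_sshift.
set phi := Gp \Po Gam.
have phi0 : phi`_0 = 0 by rewrite /phi comp_coef // big_ord1 expr0 coef1 mulr1.
have Hphi : eqm N (Gam \Po phi) Gam.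
  rewrite /phi comp_polyA; apply: eqm_trans (eqm_compl Gam0 F3) _.
  rewrite comp_polyX; exact: eqmxx.
have phiX := comp_inj Gam0 Gam1 phi0 Hphi.
have phi2 : eqm N phi (Gam * (IH \Po Gam)).
  by rewrite -[Gam in Gam * _]comp_polyX -comp_polyM; apply: eqm_compl.
set H' : {poly C} := 1 + 'X * Pr.
have E1 : eqm N (H' * IH) 1.
  by apply: eqm_trans F1; apply: eqmM; [apply: eqm_sym|apply: eqmxx].
have E2 : eqm N ((H' \Po Gam) * (IH \Po Gam)) 1.
  rewrite -comp_polyM -[X in eqm _ _ X](comp_polyC 1 Gam).
  by rewrite polyC1; apply: eqm_compl.
have E3 : eqm N Gam ('X * (H' \Po Gam)).
  rewrite -[Gam in eqm _ Gam _]mulr1.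
  apply: eqm_trans (_ : eqm N _ (Gam * ((H' \Po Gam) * (IH \Po Gam)))) _.
    by apply: eqmM; [apply: eqmxx|apply: eqm_sym].
  have -> : Gam * ((H' \Po Gam) * (IH \Po Gam)) = (Gam * (IH \Po Gam)) * (H' \Po Gam).
    by rewrite [_ * (IH \Po Gam)]mulrC mulrA.
  apply: eqmM; last exact: eqmxx.
  by apply: eqm_trans (eqm_sym phi2) phiX.
have E5 : eqm n.+2 M (H' \Po Gam).
  by apply: eqmX; apply: eqm_trans (eqm_sym F5) E3.
have E6 : eqm n.+2 (IM + 'X * (Pr \Po Gam)) 1.
  apply: eqm_sym; apply: eqm_trans (eqm_le _ (eqm_sym F2)) _; first by [].
  apply: eqm_trans (_ : eqm _ _ ((H' \Po Gam) * IM)) _.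
    by apply: eqmM => //; apply: eqmxx.
  rewrite /H' comp_polyD comp_polyM comp_polyX -polyC1 comp_polyC polyC1.
  rewrite mulrDl mul1r; apply: eqmD; first exact: eqmxx.
  apply: eqm_trans (_ : eqm _ _ ('X * M * (Pr \Po Gam) * IM)) _.
    by apply: eqmM; [apply: eqmM; [apply: eqm_le _ F5|apply: eqmxx]|apply: eqmxx].
  have -> : 'X * M * (Pr \Po Gam) * IM = ('X * (Pr \Po Gam)) * (M * IM) by ring.
  rewrite -[X in eqm _ _ X]mulr1; apply: eqmM; [exact: eqmxx| exact: eqm_le _ F2].
have E7 : eqm n.+2 (tr N (F_laurent rho m)) (IM + 'X * (Pr \Po Gam)).
  apply: eqm_le (_ : (n.+2 <= N)%N) _ => //.
  apply: eqm_trans (tr_sadd _ _ _) _; apply: eqmD; first exact: eqmxx.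
  apply: eqm_trans (tr_sshift _ _) _; apply: eqmM; first exact: eqmxx.
  by apply: tr_scomp.
have := eqm_trans E7 E6; move/eqm_coef/(_ n (ltnW (ltnSn _))).
rewrite tr_coef //; last by rewrite /N ltnW // ltnW.
by move=> ->; exact: coef1.
Qed.

End Fid.

Section Op.
Variable C : fieldType.
Implicit Types (p q : {poly C}) (hF : nat -> C).

Lemma Kop_big hF p N : (size p <= N)%N ->
  Kop hF p = \sum_(k < N) p`_k *: Kmono hF k.
Proof.
move=> le; rewrite /Kop (big_ord_widen N (fun k => p`_k *: Kmono hF k)) //.
rewrite big_mkcond; apply: eq_bigr => i _; case: ifP => // /negbT.
by rewrite -leqNgt => h; rewrite nth_default // scale0r.
Qed.

Lemma Kop_lin hF (a : C) p q : Kop hF (a *: p + q) = a *: Kop hF p + Kop hF q.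
Proof.
set N := (size p + size q)%N.
have hp : (size p <= N)%N by rewrite leq_addr.
have hq : (size q <= N)%N by rewrite leq_addl.
have hpq : (size (a *: p + q)%R <= N)%N.
  apply: (@leq_trans (maxn _ _)); first exact: size_polyD.
   rewrite geq_max hq andbT.
  by apply: (@leq_trans (size p)); first exact: size_scale_leq.
rewrite (Kop_big hF hp) (Kop_big hF hq) (Kop_big hF hpq) scaler_sumr -big_split.
by apply: eq_bigr => i _; rewrite coefD coefZ scalerDl scalerA.
Qed.

Lemma Kop0 hF : Kop hF 0 = 0.
Proof. by rewrite /Kop size_poly0 big_ord0. Qed.

Lemma lin0 (nu : {poly C} -> C) : lin_functional nu -> nu 0 = 0.
Proof.
move=> H; have := H 1 0 0; rewrite scaler0 addr0 mul1r.
by move=> E; apply: (addrI (nu 0)); rewrite addr0 -E.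
Qed.

Lemma lin_sum (nu : {poly C} -> C) n (c : 'I_n -> C) (f : 'I_n -> {poly C}) :
  lin_functional nu ->
  nu (\sum_(i < n) c i *: f i) = \sum_(i < n) c i * nu (f i).
Proof.
move=> H; apply/esym; apply: (big_rec2 (fun y x => y = nu x)).
  by rewrite lin0.
by move=> i y x _ ->; rewrite H.
Qed.

Lemma KopXn hF k : Kop hF 'X^k = Kmono hF k.
Proof.
rewrite /Kop size_polyXn big_ord_recr /= coefXn eqxx scale1r big1 ?add0r // => i _.
by rewrite coefXn (ltn_eqF (ltn_ord i)) scale0r.
Qed.

Lemma part1 hF (nu : {poly C} -> C) k : lin_functional nu ->
  nu (Kop hF 'X^k) = cauchy_comp (Gfun nu) hF k.
Proof.
move=> H; rewrite KopXn /Kmono lin_sum // /cauchy_comp.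
by apply: eq_bigr => i _; rewrite mulrC.
Qed.

Lemma dual_transfer hF (Pt Ps : nat -> {poly C}) (nut nus : {poly C} -> C) :
  lin_functional nut -> lin_functional nus ->
  (forall j, size (Pt j) = j.+1) -> (forall j, Kop hF (Pt j) = Ps j) ->
  (forall j, nus (Ps j) = nut (Pt j)) -> forall p, nus (Kop hF p) = nut p.
Proof.
move=> Lt Ls Hs HK Hd.
suff : forall N p, (size p <= N)%N -> nus (Kop hF p) = nut p.
  by move=> H p; apply: (H (size p)).
elim=> [|N IH] p.
  rewrite leqn0 size_poly_eq0 => /eqP ->.
  by rewrite Kop0 !lin0.
rewrite leq_eqVlt ltnS => /orP [/eqP sp|]; last exact: IH.
have lt0 : lead_coef (Pt N) != 0 by rewrite lead_coef_eq0 -size_poly_eq0 Hs.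
set c := lead_coef p / lead_coef (Pt N).
set q := p - c *: Pt N.
have Ep : p = c *: Pt N + q by rewrite /q addrC subrK.
have sq : (size q <= N)%N.
  have : (size q <= N.+1)%N.
    apply: (@leq_trans (maxn _ _)); first exact: size_polyD.
   rewrite geq_max sp leqnn /=.
    by rewrite size_polyN -(Hs N); apply: size_scale_leq.
  rewrite leq_eqVlt ltnS => /orP [/eqP Hq|//].
  have : lead_coef q = 0.
    rewrite lead_coefE Hq /= /q coefB coefZ.
    have -> : p`_N = lead_coef p by rewrite lead_coefE sp.
    have -> : (Pt N)`_N = lead_coef (Pt N) by rewrite lead_coefE Hs.
    by rewrite /c divfK // subrr.
  by move/eqP; rewrite lead_coef_eq0 => /eqP Hq0; rewrite Hq0 size_poly0 in Hq.
rewrite Ep Kop_lin Ls Lt HK Hd IH //.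
Qed.

Lemma sinv_sone N : eqm N (tr N (sinv (sone C))) 1.
Proof.
have H := tr_sinv N (a:=sone C) (oner_neq0 C).
apply: eqm_trans H; rewrite -[X in eqm _ X _]mul1r.
by apply: eqmM; [apply: eqm_sym; apply: tr_sone|apply: eqmxx].
Qed.

Lemma eqm_exp N p q j : eqm N p q -> eqm N (p ^+ j) (q ^+ j).
Proof.
move=> H; elim: j => [|j IH]; first by rewrite !expr0; apply: eqmxx.
by rewrite !exprS; apply: eqmM.
Qed.

Lemma Kmono_sone k : Kmono (sone C) k = 'X^k.
Proof.
set N := k.+2.
have Hg : eqm N (tr N (recip_laurent (sone C))) 'X.
  apply: eqm_trans (tr_sshift _ _) _; rewrite -[X in eqm _ _ X]mulr1.
  by apply: eqmM; [apply: eqmxx|apply: sinv_sone].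
rewrite /Kmono (eq_bigr (fun n : 'I_k.+1 => ((n : nat) == k)%:R *: 'X^n)); last first.
  move=> n _; congr (_ *: _).
  have /tr_eqm -> := tr_spow N (recip_laurent (sone C)) n.+1; last by [].
  have /eqm_coef -> := eqm_exp n.+1 Hg; last by [].
  by rewrite coefXn eqSS eq_sym.
rewrite big_ord_recr /= eqxx scale1r big1 ?add0r // => i _.
by rewrite (ltn_eqF (ltn_ord i)) scale0r.
Qed.

Lemma Kop_sone p : Kop (sone C) p = p.
Proof.
rewrite -[RHS]coefK poly_def /Kop; apply: eq_bigr => k _.
by rewrite Kmono_sone.
Qed.

End Op.

Theorem lemma4p10 (R : realType) (mu : probability R R)
    (mut : R -> probability R R) (r : nat -> R[i]) :
  finite_moments mu -> freely_inf_div mu ->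
  is_Rtransform (cmoment mu) r ->
  (forall t : R, 0 <= t ->
     finite_moments (mut t) /\ is_Rtransform (cmoment (mut t)) (rscale t r)) ->
  forall s t : R, 0 <= s -> s <= t ->
  (forall nu : {poly R[i]} -> R[i], lin_functional nu ->
     forall k : nat,
       Gfun (Kadj (Fst r s (mut t)) nu) k
       = cauchy_comp (Gfun nu) (Fst r s (mut t)) k)
  /\
  (forall (P : nat -> R -> {poly R[i]})
          (Pstar : nat -> R -> ({poly R[i]} -> R[i])),
     (forall (n : nat) (u : R), 0 <= u -> size (P n u) = n.+1) ->
     (forall (n : nat) (u v : R), 0 <= u -> u < v ->
        Kop (Fst r u (mut v)) (P n v) = P n u) ->
     (forall (n : nat) (u : R), 0 <= u -> lin_functional (Pstar n u)) ->
     (forall (n k : nat) (u : R), 0 <= u ->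
        Pstar n u (P k u) = (n == k)%:R) ->
     forall n k : nat,
       Gfun (Pstar n t) k = cauchy_comp (Gfun (Pstar n s)) (Fst r s (mut t)) k).

Proof.
move=> _ _ _ Hmut s t hs hst.
split; first by move=> nu H k; rewrite /Gfun /Kadj; apply: part1.
move=> P Pstar Hsize Hmart Hlin Hdual n k.
rewrite -part1; last exact: Hlin.
rewrite /Gfun.
have ht : 0 <= t := le_trans hs hst.
move: hst; rewrite le_eqVlt => /orP [/eqP est | lt].
  subst t.
  have HF : Fst r s (mut s) = sone _.
    by apply: funext => i; apply: F_id; exact: (Hmut s hs).2.
  by rewrite HF Kop_sone.
symmetry.
apply: (@dual_transfer _ _ (fun j => P j t) (fun j => P j s)).
- exact: Hlin.
- exact: Hlin.
- by move=> j; apply: Hsize.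
- by move=> j; apply: Hmart.
- by move=> j; rewrite !Hdual.
Qed.
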